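(* Let $\lambda$ be an uncountable strong limit cardinal of countable cofinality, let $\dot U$ be a unary predicate symbol, let $\varphi(v_1,\dots,v_n)$ be an $\mathcal{L}_{\in}(\dot U)$-formula and let $\alpha_1,\dots,\alpha_n<\lambda$. Then the set $\{(z_1,z_2)\in\mathsf{BC}_\lambda\times{}^{\lambda}2: (\lambda,\in_{z_1},U_{z_2})\models\varphi(\alpha_1,\dots,\alpha_n)\}$ is $\lambda$-Borel in $\mathsf{BC}_\lambda\times{}^{\lambda}2$.
   Context: Fix a bijective ordinal pairing function $\langle\cdot,\cdot\rangle:\lambda\times\lambda\to\lambda$. For $z\in{}^{\lambda}2$, $E_z$ (also written $\in_z$) is the binary relation on $\lambda$ with $\alpha\,E_z\,\beta$ iff $z(\langle\alpha,\beta\rangle)=0$, and $U_z=\{\alpha<\lambda: z(\alpha)=1\}$. If $(\lambda,E_z)$ is extensional and well-founded, $\pi_z$ is its transitive collapse. $\mathsf{BC}_\lambda$ is the set of $z$ such that $(\lambda,E_z)$ is extensional and well-founded and for each $b\in H_\lambda$, if $\pi_z^{-1}(b)$ exists then its set of $E_z$-predecessors is bounded in $\lambda$. ${}^{\lambda}2$ has the bounded topology (basic open sets $N_s=\{x:s\subseteq x\}$, $s\in{}^{\alpha}2$, $\alpha<\lambda$); a set is $\lambda$-Borel in a space if it belongs to the smallest $\lambda^+$-algebra containing the open sets of that space (here the subspace topology on $\mathsf{BC}_\lambda\times{}^{\lambda}2$). *)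

(* Defs.v *)
(* plain Rocq.  lambda is modelled as a type T carrying a
   strict well-order lt whose order type is the cardinal lambda. *)
From Stdlib Require Import Relations.

Set Implicit Arguments.

Section Card.
Variable T : Type.
Variable lt : T -> T -> Prop.

Definition injective {A B : Type} (f : A -> B) := forall x y, f x = f y -> x = y.

Definition card_le (A B : Type) := exists f : A -> B, injective f.
Definition card_lt (A B : Type) := card_le A B /\ ~ card_le B A.

Definition strict_wellorder :=
  (forall a, ~ lt a a) /\
  (forall a b c, lt a b -> lt b c -> lt a c) /\
  (forall a b, lt a b \/ a = b \/ lt b a) /\
  well_founded lt.

Definition below (a : T) := { b : T | lt b a }.

(* the order type of (T,lt) is a cardinal: every proper initial
   segment has strictly smaller cardinality *)
Definition is_cardinal_order := forall a, card_lt (below a) T.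

Definition uncountable := ~ card_le T nat.

Definition strong_limit := forall a, card_lt (below a -> bool) T.

Definition countable_cofinality :=
  exists s : nat -> T, forall a, exists n, lt a (s n).

Definition bijective2 (p : T -> T -> T) :=
  (forall a b c d, p a b = p c d -> a = c /\ b = d) /\
  (forall g, exists a b, p a b = g).

Definition Erel (p : T -> T -> T) (z : T -> bool) (a b : T) := z (p a b) = false.
Definition Upred (z : T -> bool) (a : T) := z a = true.

Definition extensional (E : T -> T -> Prop) :=
  forall a b, (forall c, E c a <-> E c b) -> a = b.

(* The condition "for each b in H_lambda, if pi_z^{-1}(b)
   exists then its set of E_z-predecessors is bounded" is rendered as:
   for each a whose collapse pi_z(a) lies in H_lambda, i.e. whose set
   of E_z-descendants (transitive closure of E_z below a, which pi_z maps
   bijectively onto trcl(pi_z(a))) has cardinality < lambda, the set of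
   E_z-predecessors of a is bounded in lambda. *)
Definition BC (p : T -> T -> T) (z : T -> bool) :=
  let E := Erel p z in
  extensional E /\ well_founded E /\
  forall a, card_lt { b : T | clos_trans T E b a } T ->
    exists g, forall b, E b a -> lt b g.

Definition X := ((T -> bool) * (T -> bool))%type.

(* basic open N_s, s in 2^a (s given as a function on T, only its
   restriction to a matters) *)
Definition Nbasic (a : T) (s : T -> bool) (x : T -> bool) :=
  forall b, lt b a -> x b = s b.

Definition is_open (O : X -> Prop) :=
  forall q, O q -> exists a s a' s',
    Nbasic a s (fst q) /\ Nbasic a' s' (snd q) /\
    forall q', Nbasic a s (fst q') -> Nbasic a' s' (snd q') -> O q'.

(* lambda-Borel subsets of the subspace S of X: the smallest family of
   subsets of S containing the relatively open sets and closed under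
   relative complement and unions of <= lambda many sets (families are
   indexed by T; nonempty families of size <= lambda are obtained by
   repetition, the empty set is open). *)
Inductive lamBorel (S : X -> Prop) : (X -> Prop) -> Prop :=
| lB_open : forall O, is_open O -> lamBorel S (fun q => S q /\ O q)
| lB_compl : forall A, lamBorel S A -> lamBorel S (fun q => S q /\ ~ A q)
| lB_union : forall F : T -> X -> Prop, (forall i, lamBorel S (F i)) ->
    lamBorel S (fun q => exists i, F i q)
| lB_ext : forall A B, lamBorel S A -> (forall q, A q <-> B q) -> lamBorel S B.

End Card.

(* first-order formulas of L_in(U) with de Bruijn variables *)
Inductive form : Type :=
| fMem : nat -> nat -> form
| fEq  : nat -> nat -> form
| fU   : nat -> form
| fNeg : form -> form
| fAnd : form -> form -> form
| fEx  : form -> form.           (* exists v_0, binds index 0 *)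

Definition scons {T : Type} (a : T) (e : nat -> T) (n : nat) : T :=
  match n with 0 => a | S m => e m end.

Fixpoint sat {T : Type} (E : T -> T -> Prop) (U : T -> Prop)
  (e : nat -> T) (f : form) : Prop :=
  match f with
  | fMem i j => E (e i) (e j)
  | fEq i j => e i = e j
  | fU i => U (e i)
  | fNeg g => ~ sat E U e g
  | fAnd g h => sat E U e g /\ sat E U e h
  | fEx g => exists a, sat E U (scons a e) g
  end.

(* Main.v *)
Require Import Defs.
From Stdlib Require Import Classical.

Section L.
Variable T : Type.
Variable lt : T -> T -> Prop.
Variable S : X T -> Prop.

Lemma lB_open_set (O : X T -> Prop) : is_open lt O ->
  lamBorel lt S (fun q => S q /\ O q).
Proof. intro H; now apply lB_open. Qed.

Lemma union2 (t0 t1 : T) (Hne : t0 <> t1) A B :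
  lamBorel lt S A -> lamBorel lt S B -> lamBorel lt S (fun q => A q \/ B q).
Proof.
  intros HA HB.
  assert (HF : forall i, lamBorel lt S (fun q => (i = t0 /\ A q) \/ (i <> t0 /\ B q))).
  2:{ apply (lB_ext _ (@lB_union T lt S _ HF)).
    intro q; split.
    + intros [i [[_ h]|[_ h]]]; auto.
    + intros [h|h]; [exists t0; left; auto | exists t1; right; auto]. }
  intro i. destruct (classic (i = t0)) as [e|e].
  + apply (lB_ext _ HA); intro q; split; [intro; left; auto | intros [[_ h]|[h _]]; tauto].
  + apply (lB_ext _ HB); intro q; split; [intro; right; auto | intros [[h _]|[_ h]]; tauto].
Qed.
End L.

Theorem lemma3 (T : Type) (lt : T -> T -> Prop)
  (Hwo : strict_wellorder lt) (Hcard : is_cardinal_order lt)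
  (Hunc : uncountable T) (Hsl : strong_limit lt)
  (Hcof : countable_cofinality lt)
  (pair : T -> T -> T) (Hpair : bijective2 pair)
  (phi : form) (alpha : nat -> T) :
  lamBorel lt (fun q : X T => BC lt pair (fst q))
    (fun q : X T => BC lt pair (fst q) /\
       sat (Erel pair (fst q)) (Upred (snd q)) alpha phi).
Proof.
  set (S := fun q : X T => BC lt pair (fst q)).
  assert (Htwo : exists t0 t1 : T, t0 <> t1).
  { apply NNPP; intro N. apply Hunc. exists (fun _ => 0).
    intros x y _. apply NNPP; intro Hxy. apply N; eauto. }
  destruct Htwo as [t0 [t1 Hne]].
  destruct Hcof as [sq Hsq].
  assert (Hopen1 : forall (f : X T -> T) (c : T) (b : bool),
     (forall q, f q = c) -> True) by auto.
  assert (Hfst : forall c b, is_open lt (fun q : X T => fst q c = b)).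
  { intros c b q Hq. destruct (Hsq c) as [n Hn].
    exists (sq n), (fst q), (sq n), (snd q). repeat split; auto.
    intros q' H1 _. rewrite (H1 c Hn); auto. }
  assert (Hsnd : forall c b, is_open lt (fun q : X T => snd q c = b)).
  { intros c b q Hq. destruct (Hsq c) as [n Hn].
    exists (sq n), (fst q), (sq n), (snd q). repeat split; auto.
    intros q' _ H2. rewrite (H2 c Hn); auto. }
  assert (HT : is_open lt (fun _ : X T => True)).
  { intros q _. exists t0, (fst q), t0, (snd q). repeat split; auto. }
  assert (HF : is_open lt (fun _ : X T => False)).
  { intros q []. }
  revert alpha; induction phi; intro alpha; simpl.
  - apply (lB_ext _ (lB_open S (Hfst (pair (alpha n) (alpha n0)) false))).
    intro q; unfold Erel; tauto.
  - destruct (classic (alpha n = alpha n0)) as [e|e].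
    + apply (lB_ext _ (lB_open S HT)); intro q; tauto.
    + apply (lB_ext _ (lB_open S HF)); intro q; tauto.
  - apply (lB_ext _ (lB_open S (Hsnd (alpha n) true))).
    intro q; unfold Upred; tauto.
  - apply (lB_ext _ (lB_compl (IHphi alpha))); intro q; tauto.
  - pose proof (@union2 T lt S t0 t1 Hne _ _ (lB_compl (IHphi1 alpha)) (lB_compl (IHphi2 alpha))) as U.
    apply (lB_ext _ (lB_compl U)); intro q; split.
    + intros [Hs Hn]; split; auto.
      split; apply NNPP; intro N; apply Hn; [left|right]; tauto.
    + intros [Hs [H1 H2]]; split; auto; tauto.
  - apply (lB_ext _ (@lB_union T lt S _ (fun a => IHphi (scons a alpha)))).
    intro q; split.
    + intros [a [Hs Ha]]; eauto.
    + intros [Hs [a Ha]]; eauto.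
Qed.
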